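(* Let $a\in\mathbb{R}$ and let $f$ be a real function analytic on an open interval containing $a$. For $b>a$ (with $b$ in that interval), fix an antiderivative $f^{(-1)}$ of $f$ and define the characteristic numbers $c_n^f=\int_a^b f^{(n)}(x)\,dx=f^{(n-1)}(b)-f^{(n-1)}(a)$ for $n\ge 0$, and for $N\in\mathbb{N}_0$ define \[ \mathcal{A}^{f,B}_{(a,b),N}(x)=\sum_{n=0}^{N} c_n^f\,(b-a)^{n-1}\,\frac{1}{n!}\,B_n\!\left(\frac{x-a}{b-a}\right), \] where $B_n$ is the $n$-th Bernoulli polynomial. Then for every fixed $N$ and every real $x$, \[ \lim_{b\to a}\mathcal{A}^{f,B}_{(a,b),N}(x)=\sum_{k=0}^{N}\frac{f^{(k)}(a)}{k!}(x-a)^k . \]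
   Context: Bernoulli polynomials: $B_n(x)=\sum_{k=0}^{n}\binom{n}{k}B_{n-k}x^k$ where $B_j$ are the Bernoulli numbers; they satisfy $B_0=1$, $B_n'=nB_{n-1}$, $\int_0^1B_n=0$ for $n\ge1$. The term $n=0$ uses $c_0^f=\int_a^b f(x)\,dx$. *)

(* Defs.v *)
From Stdlib Require Import Reals Lra Lia List.
From Coquelicot Require Import Coquelicot.
Open Scope R_scope.

(* Bernoulli numbers B_0 .. B_n, with B_0 = 1 and, for m >= 1,
   sum_{k=0}^{m} C(m+1,k) B_k = 0   (so B_1 = -1/2). *)
Fixpoint bern_list (n : nat) : list R :=
  match n with
  | O => 1 :: nil
  | S p =>
      let l := bern_list p in
      l ++ (- / INR (p + 2) *
            sum_f_R0 (fun k => Binomial.C (p + 2) k * nth k l 0) p) :: nil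
  end.

Definition bernoulli_number (n : nat) : R := nth n (bern_list n) 0.

Definition bernoulli_poly (n : nat) (x : R) : R :=
  sum_f_R0 (fun k => Binomial.C n k * bernoulli_number (n - k) * x ^ k) n.

Definition analytic_on (f : R -> R) (l u : R) : Prop :=
  forall y, l < y < u ->
    exists (r : posreal) (c : nat -> R),
      forall x, Rabs (x - y) < r -> is_pseries c (x - y) (f x).

Definition char_number (f : R -> R) (a b : R) (n : nat) : R :=
  RInt (Derive_n f n) a b.

Definition bernoulli_approx (f : R -> R) (a b : R) (N : nat) (x : R) : R :=
  sum_f_R0 (fun n => char_number f a b n * powerRZ (b - a) (Z.of_nat n - 1)
                     * / INR (Factorial.fact n) * bernoulli_poly n ((x - a) / (b - a))) N.

(* Main.v *)
Require Import Defs.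
From Stdlib Require Import Reals Lra Lia Arith.
From Coquelicot Require Import Coquelicot.
Open Scope R_scope.

Lemma ball_R (y e z : R) : ball y e z <-> Rabs (z - y) < e.
Proof. reflexivity. Qed.

Lemma bound_conv (u : nat -> R) : is_lim_seq u 0 -> exists M, forall n, Rabs (u n) <= M.
Proof.
  intros H.
  assert (H1 := proj1 (filterlim_locally u 0) H (mkposreal 1 Rlt_0_1)).
  destruct H1 as [N HN]. simpl in HN.
  assert (HB : forall m, exists M, forall n, (n <= m)%nat -> Rabs (u n) <= M).
  { induction m as [|m [M HM]].
    - exists (Rabs (u 0%nat)). intros n Hn. replace n with 0%nat by lia. lra.
    - exists (Rmax M (Rabs (u (S m)))). intros n Hn.
      destruct (Nat.eq_dec n (S m)) as [->|Hne].
      + apply Rmax_r.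
      + eapply Rle_trans; [apply HM; lia| apply Rmax_l]. }
  destruct (HB N) as [M HM].
  exists (Rmax M 1). intros n. destruct (le_lt_dec n N).
  - eapply Rle_trans; [apply HM; lia| apply Rmax_l].
  - assert (Hb0 := HN n ltac:(lia)). assert (Hb : Rabs (u n - 0) < 1) by exact Hb0. rewrite Rminus_0_r in Hb.
    eapply Rle_trans; [left; exact Hb| apply Rmax_r].
Qed.

Lemma radius_ge (c : nat -> R) (z l : R) : 0 < z -> is_pseries c z l -> Rbar_le z (CV_radius c).
Proof.
  intros Hz H.
  assert (Hl : is_lim_seq (fun k => c k * z ^ k) 0).
  { apply ex_series_lim_0. eexists. eapply is_series_ext; [|exact H].
    intros k. simpl. rewrite pow_n_pow. unfold scal; simpl. unfold mult; simpl. ring. }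
  destruct (bound_conv _ Hl) as [M HM].
  destruct (CV_radius_bounded c) as [ub _].
  apply ub. exists M. exact HM.
Qed.

Lemma locally_open_ball (a rho y : R) : Rabs (y - a) < rho ->
  locally y (fun t => Rabs (t - a) < rho).
Proof.
  intros H. assert (Hp : 0 < rho - Rabs (y - a)) by lra.
  exists (mkposreal _ Hp). intros t Ht0. assert (Ht : Rabs (t - y) < rho - Rabs (y - a)) by exact Ht0.
  revert H Ht. unfold Rabs; repeat destruct Rcase_abs; intros; lra.
Qed.

Lemma analytic_cont (f : R -> R) (a l u : R) : l < a < u -> analytic_on f l u ->
  exists rho, 0 < rho /\ forall n y, Rabs (y - a) < rho -> continuous (Derive_n f n) y.
Proof.
  intros Hlu Hf. destruct (Hf a Hlu) as [r [c Hc]].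
  set (rho := r / 2). assert (Hr := cond_pos r).
  assert (Hrad : Rbar_le rho (CV_radius c)).
  { apply radius_ge with (l := f (a + rho)). unfold rho; lra.
    replace rho with (a + rho - a) at 1 by ring. apply Hc.
    replace (a + rho - a) with rho by ring. unfold rho. rewrite Rabs_pos_eq; lra. }
  assert (Hin : forall t, Rabs (t - a) < rho -> Rbar_lt (Rabs (t + - a)) (CV_radius c)).
  { intros t Ht. eapply Rbar_lt_le_trans; [|exact Hrad]. simpl. exact Ht. }
  assert (Hfeq : forall t, Rabs (t - a) < rho -> f t = PSeries c (t + - a)).
  { intros t Ht. symmetry. apply is_pseries_unique. apply Hc. unfold rho in Ht. lra. }
  assert (HD : forall n t, Rabs (t - a) < rho ->
     Derive_n f n t = PSeries (PS_derive_n n c) (t + - a)).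
  { intros n t Ht. rewrite (Derive_n_ext_loc f (fun s => PSeries c (s + - a))).
    - rewrite Derive_n_comp_trans. apply Derive_n_PSeries. apply Hin. exact Ht.
    - eapply filter_imp; [|apply (locally_open_ball _ _ _ Ht)].
      intros s Hs. apply Hfeq. exact Hs. }
  exists rho. split. unfold rho; lra.
  intros n y Hy.
  apply continuous_ext_loc with (g := fun t => PSeries (PS_derive_n n c) (t + - a)).
  - eapply filter_imp; [|apply (locally_open_ball _ _ _ Hy)].
    intros s Hs. symmetry. apply HD. exact Hs.
  - apply continuous_comp with (f := fun t => t + - a) (g := PSeries (PS_derive_n n c)).
    + apply (ex_derive_continuous (fun t : R => t + - a)). auto_derive. exact I.
    + apply continuity_pt_filterlim. apply PSeries_continuity.
      rewrite CV_radius_derive_n. apply Hin. exact Hy.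
Qed.

Lemma lim_mult {T} (F : (T -> Prop) -> Prop) {FF : Filter F} (f g : T -> R) (lf lg : R) :
  filterlim f F (locally lf) -> filterlim g F (locally lg) ->
  filterlim (fun t => f t * g t) F (locally (lf * lg)).
Proof.
  intros Hf Hg. exact (filterlim_comp_2 f g Rmult Hf Hg (@filterlim_mult R_AbsRing lf lg)).
Qed.

Lemma lim_plus {T} (F : (T -> Prop) -> Prop) {FF : Filter F} (f g : T -> R) (lf lg : R) :
  filterlim f F (locally lf) -> filterlim g F (locally lg) ->
  filterlim (fun t => f t + g t) F (locally (lf + lg)).
Proof.
  intros Hf Hg. exact (filterlim_comp_2 f g Rplus Hf Hg (@filterlim_plus R_AbsRing R_NormedModule lf lg)).
Qed.

Lemma lim_sum {T} (F : (T -> Prop) -> Prop) {FF : Filter F} (g : nat -> T -> R) (l : nat -> R) n :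
  (forall k, (k <= n)%nat -> filterlim (g k) F (locally (l k))) ->
  filterlim (fun t => sum_f_R0 (fun k => g k t) n) F (locally (sum_f_R0 l n)).
Proof.
  induction n as [|n IH]; intros H; simpl.
  - apply H. lia.
  - apply lim_plus; [exact FF|apply IH|]. intros k Hk; apply H; lia. apply H; lia.
Qed.

Lemma lim_right (h : R -> R) a L : filterlim h (locally a) (locally L) ->
  filterlim h (at_right a) (locally L).
Proof.
  intros H P HP. specialize (H P HP). unfold filtermap in *. unfold at_right, within.
  eapply filter_imp; [|exact H]. intros x Hx _. exact Hx.
Qed.

Lemma lim_quot (g : R -> R) (a rho : R) : 0 < rho ->
  (forall y, Rabs (y - a) < rho -> continuous g y) ->
  filterlim (fun b => RInt g a b / (b - a)) (at_right a) (locally (g a)).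
Proof.
  intros Hr Hc.
  assert (HD : is_derive (RInt g a) a (g a)).
  { apply (is_derive_RInt g (RInt g a) a a).
    - exists (mkposreal _ Hr). intros b Hb0.
      assert (Hb : Rabs (b - a) < rho) by exact Hb0.
      apply (@RInt_correct R_CompleteNormedModule). apply (@ex_RInt_continuous R_CompleteNormedModule). intros z Hz. apply Hc.
      revert Hb Hz. unfold Rmin, Rmax, Rabs.
      repeat destruct Rle_dec; repeat destruct Rcase_abs; intros; lra.
    - apply Hc. rewrite Rminus_diag, Rabs_R0. exact Hr. }
  apply is_derive_Reals in HD.
  apply filterlim_locally. intros eps.
  destruct (HD eps (cond_pos eps)) as [delta Hdelta].
  exists delta. intros b Hb0 Hab.
  assert (Hb : Rabs (b - a) < delta) by exact Hb0.
  assert (Hne : b - a <> 0) by lra.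
  specialize (Hdelta (b - a) Hne Hb).
  rewrite Rplus_minus in Hdelta.
  rewrite RInt_point in Hdelta.
  change (Rabs (RInt g a b / (b - a) - g a) < eps).
  replace (RInt g a b / (b - a)) with ((RInt g a b - zero) / (b - a)). exact Hdelta.
  unfold zero; simpl. f_equal. ring.
Qed.

Lemma poly_id (h X : R) (n : nat) : h <> 0 ->
  powerRZ h (Z.of_nat n - 1) * bernoulli_poly n (X / h) =
  / h * sum_f_R0 (fun k => Binomial.C n k * bernoulli_number (n - k) * X ^ k * h ^ (n - k)) n.
Proof.
  intros Hh.
  replace (Z.of_nat n - 1)%Z with (Z.of_nat n + (-1))%Z by lia.
  rewrite powerRZ_add by exact Hh. rewrite <- pow_powerRZ.
  replace (powerRZ h (-1)) with (/ h) by (simpl; field; exact Hh).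
  unfold bernoulli_poly.
  rewrite scal_sum, scal_sum.
  apply sum_eq. intros k Hk.
  assert (Hn : h ^ n = h ^ k * h ^ (n - k)).
  { rewrite <- pow_add. f_equal. lia. }
  rewrite Hn. unfold Rdiv. rewrite Rpow_mult_distr, pow_inv.
  assert (h ^ k <> 0) by (apply pow_nonzero; exact Hh).
  field. split; assumption.
Qed.

Lemma poly_at0 (X : R) (n : nat) :
  sum_f_R0 (fun k => Binomial.C n k * bernoulli_number (n - k) * X ^ k * 0 ^ (n - k)) n = X ^ n.
Proof.
  destruct n as [|m].
  - simpl. unfold bernoulli_number; simpl. unfold Binomial.C; simpl. field.
  - rewrite tech5.
    rewrite sum_eq_R0.
    + rewrite Nat.sub_diag, C_n_n. unfold bernoulli_number; simpl. ring.
    + intros k Hk. rewrite (pow_i (S m - k)) by lia. ring.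
Qed.

Lemma lim_powh (a : R) (m : nat) :
  filterlim (fun b => (b - a) ^ m) (at_right a) (locally (0 ^ m)).
Proof.
  apply lim_right.
  assert (H : continuous (fun b : R => (b - a) ^ m) a).
  { apply (@ex_derive_continuous R_AbsRing R_NormedModule). auto_derive. exact I. }
  unfold continuous in H. cbv beta in H. rewrite Rminus_diag in H. exact H.
Qed.

Theorem proposition2 (f : R -> R) (a l u : R) (Hlu : l < a < u)
  (Hf : analytic_on f l u) (N : nat) (x : R) :
  filterlim (fun b => bernoulli_approx f a b N x) (at_right a)
    (locally (sum_f_R0 (fun k => Derive_n f k a / INR (Factorial.fact k) * (x - a) ^ k) N)).
Proof.
  destruct (analytic_cont f a l u Hlu Hf) as [rho [Hrho Hc]].
  unfold bernoulli_approx.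
  apply (lim_sum (at_right a) (fun n b => char_number f a b n * powerRZ (b - a) (Z.of_nat n - 1)
                     * / INR (Factorial.fact n) * bernoulli_poly n ((x - a) / (b - a)))).
  intros n _.
  apply filterlim_ext_loc with (f := fun b => (RInt (Derive_n f n) a b / (b - a)) * / INR (Factorial.fact n)
     * sum_f_R0 (fun k => Binomial.C n k * bernoulli_number (n - k) * (x - a) ^ k * (b - a) ^ (n - k)) n).
  - exists (mkposreal 1 Rlt_0_1). intros b _ Hab.
    assert (Hne : b - a <> 0) by lra.
    unfold char_number.
    transitivity (RInt (Derive_n f n) a b * (powerRZ (b - a) (Z.of_nat n - 1) *
       bernoulli_poly n ((x - a) / (b - a))) * / INR (Factorial.fact n)).
    + rewrite poly_id by exact Hne. unfold Rdiv. ring.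
    + ring.
  - replace (Derive_n f n a / INR (Factorial.fact n) * (x - a) ^ n) with
      (Derive_n f n a * / INR (Factorial.fact n) *
       sum_f_R0 (fun k => Binomial.C n k * bernoulli_number (n - k) * (x - a) ^ k * 0 ^ (n - k)) n)
      by (rewrite poly_at0; unfold Rdiv; ring).
    apply lim_mult. apply _.
    + apply lim_mult. apply _.
      * apply (lim_quot (Derive_n f n) a rho Hrho). intros y Hy. apply Hc. exact Hy.
      * apply filterlim_const.
    + apply (lim_sum (at_right a) (fun k b => Binomial.C n k * bernoulli_number (n - k) * (x - a) ^ k * (b - a) ^ (n - k))).
      intros k _. apply lim_mult. apply _.
      * apply filterlim_const.
      * apply lim_powh.
Qed.
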